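(* Let $3\le w<n$ and suppose a Steiner system $S(3,w,n)$ exists. Then $$q'_0(3,w,n)=\min_{S}\ \max_{D\in S'}\ \chi(D)+1,$$ where the minimum is over all Steiner systems $S$ of type $S(3,w,n)$ and, for each such $S$, $S'$ denotes the set of all $S(2,w-1,n-1)$ systems derived from $S$ (one for each point of $S$).
   Context: $\mathbb{Z}_q=\{0,\dots,q-1\}$ (an alphabet); $\mathrm{wt}$ = number of nonzero coordinates; $d$ = Hamming distance; $J_q(n,w)$ = weight-$w$ words of $\mathbb{Z}_q^n$. An $(n,w,d)_q$ code of size $M$ is a subset $C\subseteq J_q(n,w)$ with $|C|=M$ and pairwise distances at least $d$. A Steiner system $S(t,k,n)$ is a pair $(N,B)$, $|N|=n$, $B$ a set of $k$-subsets (blocks) of $N$ with every $t$-subset of $N$ in exactly one block. For $\alpha\subset N$ with $0<|\alpha|<t$, the derived system is $(N\setminus\alpha,\{\beta\setminus\alpha:\alpha\subseteq\beta\in B\})$, an $S(t-|\alpha|,k-|\alpha|,n-|\alpha|)$. For a Steiner system $S(t,k,n)$, $\chi(S)$ is the minimum number of classes in a partition of its block set such that any two distinct blocks in the same class intersect in at most $t-2$ points (chromatic number of the graph on blocks where two blocks are adjacent iff they share exactly $t-1$ points); for $t=2$ this means blocks in the same class are pairwise disjoint. For $t,k,n$ such that an $S(t,k,n)$ exists, $q'_0(t,k,n)$ is the smallest $q$ for which an $(n,k,2k-t+1)_q$ code of size $\binom{n}{t}/\binom{k}{t}$ exists. *)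

(* Defs.v *)
From mathcomp Require Import all_boot.
Set Implicit Arguments. Unset Strict Implicit. Unset Printing Implicit Defensive.

Definition steiner (t k n : nat) (B : {set {set 'I_n}}) : bool :=
  [forall X in B, #|X| == k] &&
  [forall T : {set 'I_n}, (#|T| == t) ==> (#|[set X in B | T \subset X]| == 1)].

(* Blocks of the derived system at the point p (on the point set 'I_n minus p). *)
Definition derived n (B : {set {set 'I_n}}) (p : 'I_n) : {set {set 'I_n}} :=
  [set X :\ p | X in [set X in B | p \in X]].

Definition colorable (T : finType) (t : nat) (B : {set {set T}}) (k : nat) : bool :=
  [exists f : {ffun {set T} -> 'I_k},
    [forall X1 in B, forall X2 in B,
       ((X1 != X2) && (f X1 == f X2)) ==> (#|X1 :&: X2| <= t - 2)]].

Lemma colorable_exists (T : finType) (t : nat) (B : {set {set T}}) :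
  exists k, colorable t B k.
Proof.
exists #|{set T}|; apply/existsP; exists [ffun X => enum_rank X].
apply/forallP => X1; apply/implyP => _; apply/forallP => X2; apply/implyP => _.
apply/implyP => /andP [ne]; rewrite !ffunE => /eqP /enum_rank_inj E.
by rewrite E eqxx in ne.
Qed.

Definition chi (T : finType) (t : nat) (B : {set {set T}}) : nat :=
  ex_minn (colorable_exists t B).

Definition max_derived_chi n (B : {set {set 'I_n}}) : nat :=
  \max_(p : 'I_n) chi 2 (derived B p).

Definition wt n q (x : {ffun 'I_n -> 'I_q}) : nat := #|[set i | (x i : nat) != 0]|.
Definition hdist n q (x y : {ffun 'I_n -> 'I_q}) : nat := #|[set i | x i != y i]|.

Definition code_exists (t k n q : nat) : Prop :=
  exists C : {set {ffun 'I_n -> 'I_q}},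
    [/\ forall x, x \in C -> wt x = k,
        forall x y, x \in C -> y \in C -> x != y -> 2 * k - t + 1 <= hdist x y
      & #|C| = 'C(n, t) %/ 'C(k, t)].

(* Main.v *)
Require Import Defs.
From mathcomp Require Import all_boot.
From mathcomp Require Import zify.
Set Implicit Arguments. Unset Strict Implicit. Unset Printing Implicit Defensive.
Lemma card_sum_ind (T : finType) (A : {pred T}) (P : pred T) :
  #|[set x in A | P x]| = \sum_(x in A) (P x : nat).
Proof.
rewrite -sum1_card big_mkcond [RHS]big_mkcond /=.
by apply: eq_bigr => x _; rewrite !inE; case: (x \in A); case: (P x).
Qed.

Lemma count_pairs n (S : {set {set 'I_n}}) k :
 (forall X, X \in S -> #|X| = k) ->
 \sum_(T : {set 'I_n} | #|T| == 3) #|[set X in S | T \subset X]| = #|S| * 'C(k, 3).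
Proof.
move=> HS.
under eq_bigr => T _ do rewrite card_sum_ind.
rewrite exchange_big /= -sum_nat_const.
apply: eq_bigr => X XS.
rewrite -(HS X XS) -cards_draws.
rewrite -sum1_card big_mkcond [RHS]big_mkcond /=.
by apply: eq_bigr => T _; rewrite !inE; case: (T \subset X); case: (#|T| == 3).
Qed.
Definition supp n q (x : {ffun 'I_n -> 'I_q}) : {set 'I_n} := [set i | (x i : nat) != 0].
Definition agree n q (x y : {ffun 'I_n -> 'I_q}) : {set 'I_n} :=
  [set i : 'I_n | (i \in supp x :&: supp y) && (x i == y i)].

Lemma hdist_eq n q (x y : {ffun 'I_n -> 'I_q}) :
  hdist x y + #|agree x y| + #|supp x :&: supp y| = wt x + wt y.
Proof.
have E : [set i | x i != y i] = (supp x :|: supp y) :\: agree x y.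
  apply/setP => i; rewrite !inE -val_eqE /=.
  case: (x i : nat) => [|a]; case: (y i : nat) => [|b] //=.
  by rewrite andbT.
have sub : agree x y \subset supp x :|: supp y.
  apply/subsetP => i; rewrite !inE; by case/andP => /andP [-> _].
rewrite /hdist E cardsD (setIidPr sub) /wt -/(supp x) -/(supp y) -cardsUI.
by rewrite subnK // subset_leq_card.
Qed.

Lemma steiner_card n w (B : {set {set 'I_n}}) :
  steiner 3 w B -> #|B| * 'C(w,3) = 'C(n,3).
Proof.
case/andP => /forallP Hs /forallP Ht.
rewrite -(count_pairs (k:=w)); last by move=> X XB; apply/eqP; move/implyP: (Hs X); apply.
rewrite (eq_bigr (fun _ => 1)); last by move=> T /eqP HT; apply/eqP; move/implyP: (Ht T); apply; apply/eqP.
rewrite sum1_card. have := @card_draws ('I_n : finType) 3. rewrite card_ord cardsE. done.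
Qed.

Lemma exists_sub3 n (A : {set 'I_n}) : 3 <= #|A| -> exists T : {set 'I_n}, T \subset A /\ #|T| = 3.
Proof.
move=> h.
have : 0 < #|[set T : {set 'I_n} | T \subset A & #|T| == 3]| by rewrite cards_draws bin_gt0.
rewrite card_gt0 => /set0Pn [T]; rewrite inE => /andP [s /eqP c]; by exists T.
Qed.

Lemma steiner_meet n w (B : {set {set 'I_n}}) X Y :
  steiner 3 w B -> X \in B -> Y \in B -> X != Y -> #|X :&: Y| <= 2.
Proof.
case/andP => _ /forallP Ht XB YB XY; rewrite leqNgt; apply/negP => h.
have [T [sT cT]] := exists_sub3 h.
move/implyP: (Ht T); rewrite cT eqxx => /(_ isT) /eqP c1.
have : #|[set Z in B | T \subset Z]| <= 1 by rewrite c1.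
move/card_le1_eqP => e.
have eXY : X = Y.
  apply: e; rewrite in_set ?XB ?YB /=; apply: (subset_trans sT).
  exact: subsetIr. exact: subsetIl.
by rewrite eXY eqxx in XY.
Qed.

Lemma sum_le1 (I : finType) (P : pred I) (a : I -> nat) :
  (forall i, P i -> a i <= 1) -> \sum_(i | P i) a i = #|P| -> forall i, P i -> a i = 1.
Proof.
move=> le1 hs.
have h0 : \sum_(i | P i) (1 - a i) == 0.
  have : \sum_(i | P i) (a i + (1 - a i)) = #|P|.
    rewrite -sum1_card; apply: eq_bigr => i Pi; by rewrite subnKC // le1.
  rewrite big_split /= hs => e; apply/eqP; lia.
move=> i Pi; move: h0; rewrite sum_nat_eq0 => /forallP /(_ i); rewrite Pi /=.
have := le1 i Pi; lia.
Qed.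

Lemma colorable_mono (T : finType) t (B : {set {set T}}) k k' :
  k <= k' -> colorable t B k -> colorable t B k'.
Proof.
move=> le /existsP [f Hf]; apply/existsP; exists [ffun X => widen_ord le (f X)].
apply/forallP => X1; apply/implyP => X1B; apply/forallP => X2; apply/implyP => X2B.
move/forallP: Hf => /(_ X1) /implyP /(_ X1B) /forallP /(_ X2) /implyP /(_ X2B).
by rewrite !ffunE -!val_eqE.
Qed.

Lemma chi_colorable (T : finType) t (B : {set {set T}}) : colorable t B (chi t B).
Proof. rewrite /chi; by case: ex_minnP. Qed.

Lemma chi_min (T : finType) t (B : {set {set T}}) k : colorable t B k -> chi t B <= k.
Proof. rewrite /chi => h; case: ex_minnP => m _; apply; exact: h. Qed.

Lemma in_derived n (S : {set {set 'I_n}}) p X : X \in S -> p \in X -> X :\ p \in derived S p.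
Proof. move=> XS pX; apply/imsetP; exists X => //; by rewrite inE XS pX. Qed.

Lemma setD1_inj n (X Y : {set 'I_n}) p : p \in X -> p \in Y -> X :\ p = Y :\ p -> X = Y.
Proof. by move=> pX pY e; rewrite -(setD1K pX) -(setD1K pY) e. Qed.

Lemma code_of_steiner n w m (S : {set {set 'I_n}}) :
  3 <= w -> steiner 3 w S -> (forall p, colorable 2 (derived S p) m) ->
  code_exists 3 w n m.+1.
Proof.
move=> w3 St H.
have H' : forall p, exists g : {ffun {set 'I_n} -> 'I_m},
    [forall X1 in derived S p, forall X2 in derived S p,
       ((X1 != X2) && (g X1 == g X2)) ==> (#|X1 :&: X2| <= 2 - 2)].
  by move=> p; apply/existsP; exact: H p.
have [f Hf] := fin_all_exists H'.
pose word (X : {set 'I_n}) : {ffun 'I_n -> 'I_m.+1} :=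
  [ffun i => if i \in X then lift ord0 (f i (X :\ i)) else ord0].
have suppw X : supp (word X) = X.
  apply/setP => i; rewrite !inE ffunE; case: (i \in X) => //; by rewrite lift0.
have Sw : forall X, X \in S -> #|X| = w.
  move: St => /andP [/forallP Hs _] X XS; apply/eqP; move/implyP: (Hs X); exact.
exists [set word X | X in S]; split.
- move=> x /imsetP [X XS ->]. rewrite /wt -/(supp (word X)) suppw; exact: Sw.
- move=> x y /imsetP [X XS ->] /imsetP [Y YS ->] xy.
  have XY : X != Y by apply: contraNneq xy => ->.
  have := hdist_eq (word X) (word Y).
  rewrite /wt -/(supp (word X)) -/(supp (word Y)) !suppw (Sw X XS) (Sw Y YS).
  have s2 := steiner_meet St XS YS XY.
  have aS : #|agree (word X) (word Y)| <= #|X :&: Y|.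
    rewrite -{2}(suppw X) -{2}(suppw Y); apply: subset_leq_card; apply/subsetP => i.
    by rewrite inE => /andP [].
  case: (posnP #|agree (word X) (word Y)|) => [a0|].
    move=> e; lia.
  rewrite card_gt0 => /set0Pn [i]; rewrite inE suppw suppw => /andP [iXY].
  move: (iXY); rewrite inE => /andP [iX iY].
  rewrite !ffunE iX iY => /eqP /lift_inj efi.
  move/forallP: (Hf i) => /(_ (X :\ i)) /implyP /(_ (in_derived XS iX)).
  move=> /forallP /(_ (Y :\ i)) /implyP /(_ (in_derived YS iY)).
  have -> : (X :\ i != Y :\ i).
    apply: contraNneq XY => e. apply/eqP; exact: (setD1_inj iX iY e).
  move/implyP => h0; have h := h0 (introT eqP efi); clear h0.
  have : #|X :&: Y| <= 1.
    rewrite (cardsD1 i) iXY.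
    have -> : (X :&: Y) :\ i = (X :\ i) :&: (Y :\ i).
      apply/setP => j; rewrite !inE; by case: (j == i); case: (j \in X).
    move: h; lia.
  move=> s1 e; lia.
- rewrite card_in_imset; last first.
    move=> X Y _ _ e; by rewrite -(suppw X) -(suppw Y) e.
  rewrite -(steiner_card St) mulnK // bin_gt0 //.
Qed.

Lemma code_key n w q (C : {set {ffun 'I_n -> 'I_q}}) :
  (forall x, x \in C -> wt x = w) ->
  (forall x y, x \in C -> y \in C -> x != y -> 2 * w - 3 + 1 <= hdist x y) ->
  forall x y, x \in C -> y \in C -> x != y ->
    #|supp x :&: supp y| + #|agree x y| <= 2.
Proof.
move=> Cw Cd x y xC yC xy; have := hdist_eq x y; rewrite (Cw x xC) (Cw y yC).
have := Cd x y xC yC xy; lia.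
Qed.

Lemma q_ge2 n w q : 3 <= w -> w < n -> (exists B : {set {set 'I_n}}, steiner 3 w B) ->
  code_exists 3 w n q -> 2 <= q.
Proof.
move=> w3 wn [B StB] [C [Cw Cd Cc]].
have cB := steiner_card StB.
have Cn : 0 < 'C(n, 3) by rewrite bin_gt0; lia.
have Cw3 : 0 < 'C(w, 3) by rewrite bin_gt0.
have : #|C| = #|B| by rewrite Cc -cB mulnK.
have : 0 < #|B| by move: Cn; rewrite -cB; case: #|B|.
move=> h1 h2; move: h1; rewrite -h2 card_gt0 => /set0Pn [x xC].
have : 0 < wt x by rewrite (Cw x xC); lia.
rewrite /wt card_gt0 => /set0Pn [i]; rewrite inE => ne.
move: ne; case: (x i) => [[|k] hk] //= _; lia.
Qed.

Lemma inord_pred_inj q (a b : 'I_q.+2) :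
  (a : nat) != 0 -> (b : nat) != 0 -> (inord a.-1 : 'I_q.+1) = inord b.-1 -> a = b.
Proof.
case: a => [a ha]; case: b => [b hb] /= ha0 hb0 /(congr1 (@nat_of_ord _)).
rewrite !inordK; try lia. move=> e; apply/val_inj => /=; lia.
Qed.

Lemma steiner_of_code n w q : 3 <= w -> w < n -> (exists B : {set {set 'I_n}}, steiner 3 w B) ->
  code_exists 3 w n q.+2 ->
  exists S : {set {set 'I_n}}, steiner 3 w S /\ forall p, colorable 2 (derived S p) q.+1.
Proof.
move=> w3 wn [B StB] [C [Cw Cd Cc]].
have key := code_key Cw Cd.
have cB := steiner_card StB.
have Cw3 : 0 < 'C(w, 3) by rewrite bin_gt0.
have CB : #|C| = #|B| by rewrite Cc -cB mulnK.
have sinj : {in C &, injective (@supp n q.+2)}.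
  move=> x y xC yC e; apply/eqP; apply/negPn/negP => xy.
  have := key x y xC yC xy; rewrite -e setIid /supp -/(wt x) (Cw x xC); lia.
pose S := [set supp x | x in C].
have SC : #|S| = #|C| by rewrite card_in_imset.
have Sw : forall X, X \in S -> #|X| = w.
  move=> X /imsetP [x xC ->]; rewrite /supp -/(wt x); exact: Cw.
have le1 : forall T : {set 'I_n}, #|T| == 3 -> #|[set X in S | T \subset X]| <= 1.
  move=> T /eqP T3; apply/card_le1_eqP => X Y; rewrite !in_set.
  move=> /andP [/imsetP [x xC ->] Tx] /andP [/imsetP [y yC ->] Ty].
  apply/eqP; apply/negPn/negP => sxy.
  have xy : x != y by apply: contraNneq sxy => ->.
  have := key x y xC yC xy.
  have : T \subset supp x :&: supp y by rewrite subsetI Tx Ty.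
  move/subset_leq_card; rewrite T3; lia.
exists S; split.
  apply/andP; split.
    by apply/forallP => X; apply/implyP => XS; rewrite (Sw X XS).
  apply/forallP => T; apply/implyP => T3; apply/eqP.
  apply: (@sum_le1 _ (fun T : {set 'I_n} => #|T| == 3)
            (fun T => #|[set X in S | T \subset X]|) le1) => //.
  rewrite (count_pairs Sw) SC CB cB.
  have := @card_draws ('I_n : finType) 3; rewrite card_ord cardsE => <-.
  by apply: eq_card => ?.
move=> p.
pose g : {ffun {set 'I_n} -> 'I_q.+1} :=
  [ffun Z => if [pick x in C | supp x == p |: Z] is Some x then inord (x p).-1 else ord0].
have gE : forall Z, Z \in derived S p -> exists2 x, x \in C &
    [/\ supp x = p |: Z, p \notin Z & g Z = inord (x p).-1].
  move=> Z /imsetP [X]; rewrite inE => /andP [/imsetP [x xC ->] px] ->.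
  rewrite ffunE; case: pickP => [x' /andP [x'C /eqP e] | none].
    exists x' => //; split => //; by rewrite setD11.
  by have := none x; rewrite xC setD1K // eqxx.
apply/existsP; exists g.
apply/forallP => Z1; apply/implyP => Z1d; apply/forallP => Z2; apply/implyP => Z2d.
apply/implyP => /andP [Z12 /eqP eg].
have [x1 x1C [e1 p1 g1]] := gE Z1 Z1d.
have [x2 x2C [e2 p2 g2]] := gE Z2 Z2d.
have x12 : x1 != x2.
  apply: contraNneq Z12 => e; move: e1; rewrite e e2 => e3.
  by rewrite -(setU1K p1) -(setU1K p2) e3.
have hp1 : (x1 p : nat) != 0 by move: (setU11 p Z1); rewrite -e1 inE.
have hp2 : (x2 p : nat) != 0 by move: (setU11 p Z2); rewrite -e2 inE.
have ex : x1 p = x2 p.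
  apply: inord_pred_inj hp1 hp2 _; by rewrite -g1 -g2.
have := key x1 x2 x1C x2C x12.
have pA : p \in agree x1 x2.
  by rewrite inE e1 e2 !inE eqxx ex eqxx.
have a1 : 0 < #|agree x1 x2| by rewrite card_gt0; apply/set0Pn; exists p.
case: (boolP (Z1 :&: Z2 == set0)) => [/eqP -> | /set0Pn [j]]; first by rewrite cards0.
rewrite inE => /andP [jZ1 jZ2].
have jp : p != j by apply: contraNneq p1 => ->.
have sub2 : [set p; j] \subset supp x1 :&: supp x2.
  apply/subsetP => k; rewrite in_setI e1 e2 !in_setU1 => /orP [/eqP -> | ].
    by rewrite !eqxx.
  rewrite in_set1 => /eqP ->; by rewrite jZ1 jZ2 !orbT.
have hs : 2 <= #|supp x1 :&: supp x2|.
  have := subset_leq_card sub2; rewrite cards2 jp; exact.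
move=> hk; exfalso; clear -hs hk a1; lia.
Qed.

Theorem mainTheorem9 (n w : nat) :
  3 <= w -> w < n ->
  (exists B : {set {set 'I_n}}, steiner 3 w B) ->
  exists S0 : {set {set 'I_n}},
    [/\ steiner 3 w S0,
        forall S : {set {set 'I_n}}, steiner 3 w S ->
          max_derived_chi S0 <= max_derived_chi S,
        code_exists 3 w n (max_derived_chi S0 + 1)
      & forall q, code_exists 3 w n q -> max_derived_chi S0 + 1 <= q].
Proof.
move=> w3 wn [B StB].
case: (arg_minnP (@max_derived_chi n) StB) => S0 St0 min0.
exists S0; split => //.
- rewrite addn1; apply: (code_of_steiner w3 St0) => p.
  apply: (colorable_mono _ (chi_colorable _ _)).
  rewrite /max_derived_chi. by rewrite (bigD1 p) //= leq_maxl.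
- move=> q cq.
  have q2 := q_ge2 w3 wn (ex_intro _ B StB) cq.
  move: q q2 cq => [|[|q']] // _ cq.
  have [S [St HS]] := steiner_of_code w3 wn (ex_intro _ B StB) cq.
  have := min0 S St.
  have : max_derived_chi S <= q'.+1.
    by apply/bigmax_leqP => p _; apply: chi_min.
  lia.
Qed.
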